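(* Let $m\ge 2$, $k\ge 1$, $n\ge 1$, and let $\mathcal{A}=(a_{i_1i_2\cdots i_m})\in\mathbb{C}^{[m,n]}$ and $\mathcal{B}=(b_{i_1i_2\cdots i_k})\in\mathbb{C}^{[k,n]}$. Then: (1) $r_i(\mathcal{A}\mathcal{B})\le r_i(\mathcal{A})\,(R(\mathcal{B}))^{m-1}$ for all $i\in[n]$; (2) if $\mathcal{A}$ and $\mathcal{B}$ are nonnegative tensors, then for all $i\in[n]$, \[r_i(\mathcal{A}\mathcal{B})=\sum_{i_2,\ldots,i_m=1}^n a_{ii_2\cdots i_m}\, r_{i_2}(\mathcal{B})\cdots r_{i_m}(\mathcal{B}).\]
   Context: $[n]=\{1,\ldots,n\}$. $\mathbb{C}^{[m,n]}$ (resp. $\mathbb{R}_+^{[m,n]}$) denotes the set of order $m$, dimension $n$ tensors $\mathcal{A}=(a_{i_1\cdots i_m})$, $i_j\in[n]$, with complex (resp. nonnegative real) entries. For $\mathcal{A}\in\mathbb{C}^{[m,n]}$: $r_i(\mathcal{A})=\sum_{i_2,\ldots,i_m=1}^n |a_{ii_2\cdots i_m}|$, $r(\mathcal{A})=\min_{i\in[n]} r_i(\mathcal{A})$, $R(\mathcal{A})=\max_{i\in[n]} r_i(\mathcal{A})$. General product: for $\mathcal{A}\in\mathbb{C}^{[m,n]}$ ($m\ge2$) and $\mathcal{B}\in\mathbb{C}^{[k,n]}$ ($k\ge1$), $\mathcal{A}\mathcal{B}=(c_{i\alpha_1\cdots\alpha_{m-1}})$ is the order $(m-1)(k-1)+1$,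 dimension $n$ tensor with entries $c_{i\alpha_1\cdots\alpha_{m-1}}=\sum_{i_2,\ldots,i_m=1}^n a_{ii_2\cdots i_m} b_{i_2\alpha_1}\cdots b_{i_m\alpha_{m-1}}$ for $i\in[n]$, $\alpha_1,\ldots,\alpha_{m-1}\in[n]^{k-1}$ (here $b_{j\alpha}$ with $\alpha=(j_2,\ldots,j_k)$ means $b_{jj_2\cdots j_k}$). Thus $r_i(\mathcal{A}\mathcal{B})=\sum_{\alpha_1,\ldots,\alpha_{m-1}\in[n]^{k-1}}|c_{i\alpha_1\cdots\alpha_{m-1}}|$. *)

(* Defs.v *)
From HB Require Import structures.
From mathcomp Require Import all_boot all_order all_algebra.
From mathcomp Require Import reals complex.
Set Implicit Arguments. Unset Strict Implicit. Unset Printing Implicit Defensive.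
Import Order.TTheory GRing.Theory Num.Theory.
Local Open Scope ring_scope.
Local Open Scope complex_scope.

(* An order m, dimension n tensor A = (a_{i_1 i_2 ... i_m}) with entries in C
   is represented as a function of the first index i_1 : 'I_n and the
   remaining m-1 indices (i_2,...,i_m) : (m.-1).-tuple 'I_n.
   (Indices are 0-based: 'I_n = {0,...,n-1} stands for [n].) *)
Definition tensor (C : Type) (m n : nat) := 'I_n -> (m.-1).-tuple 'I_n -> C.

Section Tensors.
Variable C : numDomainType.

Definition rsum (m n : nat) (A : tensor C m n) (i : 'I_n) : C :=
  \sum_(t : (m.-1).-tuple 'I_n) `|A i t|.

(* R(A) = max_i r_i(A)   (all r_i are nonnegative reals, so this is the max;
   for n = 0 it is 0). *)
Definition Rmax (m n : nat) (A : tensor C m n) : C :=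
  \big[Num.max/0]_(i < n) rsum A i.

Definition nonneg_tensor (m n : nat) (A : tensor C m n) : Prop :=
  forall i t, 0 <= A i t.

(* The j-th block alpha_j in [n]^{k-1} of the index string
   (alpha_1,...,alpha_{m-1}) in [n]^{(m-1)(k-1)}. *)
Definition block (m k n : nat) (t : (m.-1 * k.-1).-tuple 'I_n) (j : 'I_m.-1)
  : (k.-1).-tuple 'I_n :=
  [tuple tnth t (mxvec_index j l) | l < k.-1].

Definition tprod (m k n : nat) (A : tensor C m n) (B : tensor C k n)
  : tensor C (m.-1 * k.-1).+1 n :=
  fun i t => \sum_(u : (m.-1).-tuple 'I_n)
               A i u * \prod_(j < m.-1) B (tnth u j) (block t j).

End Tensors.

(* Main.v *)
Require Import Defs.
From HB Require Import structures.
From mathcomp Require Import all_boot all_order all_algebra.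
From mathcomp Require Import reals complex.
Import Order.TTheory GRing.Theory Num.Theory.
Local Open Scope ring_scope.
Local Open Scope complex_scope.

Lemma bigmax_ge (C : numDomainType) (I : eqType) (s : seq I) (F : I -> C) :
  (forall x, 0 <= F x) ->
  0 <= \big[Num.max/0]_(j <- s) F j /\
  forall x, x \in s -> F x <= \big[Num.max/0]_(j <- s) F j.
Proof.
move=> F0; elim: s => [|y s [IH1 IH2]]; first by rewrite big_nil.
rewrite big_cons.
have Ry : F y \is Num.real by apply: ger0_real.
have RM : \big[Num.max/0]_(j <- s) F j \is Num.real by apply: ger0_real.
case: (real_leP Ry RM) => H; split.
- by [].
- move=> x; rewrite inE => /orP [/eqP -> //|/IH2 //].
- exact: F0.
- move=> x; rewrite inE => /orP [/eqP -> //|/IH2 Hx].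
  by apply: (le_trans Hx); apply: ltW.
Qed.

Lemma bigmax_ge_fin (C : numDomainType) (I : finType) (F : I -> C) :
  (forall x, 0 <= F x) -> forall x, F x <= \big[Num.max/0]_(j : I) F j.
Proof. by move=> F0 x; have [_ H] := @bigmax_ge _ _ (index_enum I) _ F0; apply: H; rewrite mem_index_enum. Qed.

Lemma key (C : numDomainType) (a b n : nat)
  (F : 'I_a -> b.-tuple 'I_n -> C) :
  \sum_(t : (a * b).-tuple 'I_n)
     \prod_(j < a) F j [tuple tnth t (mxvec_index j l) | l < b]
  = \prod_(j < a) \sum_(s : b.-tuple 'I_n) F j s.
Proof.
rewrite bigA_distr_bigA /=.
pose g (t : (a * b).-tuple 'I_n) : {ffun 'I_a -> b.-tuple 'I_n} :=
  [ffun j => [tuple tnth t (mxvec_index j l) | l < b]].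
have gi : injective g.
  move=> t1 t2 H; apply: eq_from_tnth => x.
  case: (mxvec_indexP x) => j l.
  have := congr1 (fun f : {ffun 'I_a -> b.-tuple 'I_n} => tnth (f j) l) H.
  by rewrite /g /= !ffunE !tnth_mktuple.
have gb : bijective g.
  apply: (inj_card_bij gi).
  by rewrite card_ffun !card_tuple !card_ord -expnM mulnC.
rewrite [RHS](reindex g) /=; last by apply: onW_bij.
by apply: eq_bigr => t _; apply: eq_bigr => j _; rewrite /g ffunE.
Qed.

Theorem lemma2p4 (R : realType) (m k n : nat)
  (A : tensor R[i] m n) (B : tensor R[i] k n) :
  (2 <= m)%N -> (1 <= k)%N -> (1 <= n)%N ->
  (forall i : 'I_n, rsum (tprod A B) i <= rsum A i * (Rmax B) ^+ (m - 1))
  /\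
  (nonneg_tensor A -> nonneg_tensor B ->
   forall i : 'I_n,
     rsum (tprod A B) i =
     \sum_(u : (m.-1).-tuple 'I_n) A i u * \prod_(j < m.-1) rsum B (tnth u j)).
Proof.
move=> hm hk hn; split.
- move=> i; rewrite /rsum /tprod.
  apply: le_trans (_ : \sum_t \sum_(u : (m.-1).-tuple 'I_n)
      `|A i u| * \prod_(j < m.-1) `|B (tnth u j) (block t j)| <= _).
    apply: ler_sum => t _; apply: le_trans (ler_norm_sum _ _ _) _.
    by apply: ler_sum => u _; rewrite normrM (big_morph _ (@normrM _) (@normr1 _)).
  rewrite exchange_big /= mulr_suml; apply: ler_sum => u _.
  rewrite -mulr_sumr; apply: ler_wpM2l; first exact: normr_ge0.
  rewrite /block (@key _ _ _ _ (fun j s => `|B (tnth u j) s|)).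
  have -> : (m - 1)%N = #|'I_m.-1| by rewrite card_ord subn1.
  rewrite -prodr_const; apply: ler_prod => j _.
  apply/andP; split; first by apply: sumr_ge0 => *; exact: normr_ge0.
  exact: (@bigmax_ge_fin _ _ (rsum B) (fun x => sumr_ge0 _ (fun _ _ => normr_ge0 _)) (tnth u j)).
- move=> hA hB i; rewrite /rsum /tprod.
  under eq_bigr => t _.
    rewrite ger0_norm; last first.
      by apply: sumr_ge0 => u _; apply: mulr_ge0 => //; apply: prodr_ge0.
    over.
  rewrite exchange_big /=; apply: eq_bigr => u _.
  rewrite -mulr_sumr /block (@key _ _ _ _ (fun j s => B (tnth u j) s)); congr (_ * _).
  apply: eq_bigr => j _; apply: eq_bigr => s _.
  by rewrite ger0_norm.
Qed.
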